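(* Let $\Omega\subset\mathbb R^m$ be an open, bounded, convex set and let $h:\mathbb R^k\times\Omega\to\mathbb R$ be continuous, such that for each $\mathcal X\in\mathbb R^k$ the function $h(\mathcal X,\cdot)$ is concave on $\Omega$. Then $H(\mathcal X):=\sup_{\tau\in\Omega}h(\mathcal X,\tau)$ is continuous on $\mathbb R^k$. *)

(* Defs.v *)
From HB Require Import structures.
From mathcomp Require Import all_boot all_order all_algebra.
From mathcomp Require Import all_classical all_reals all_analysis.
Set Implicit Arguments. Unset Strict Implicit. Unset Printing Implicit Defensive.
Import Order.TTheory GRing.Theory Num.Theory.
Import numFieldNormedType.Exports.
Local Open Scope classical_set_scope.
Local Open Scope ring_scope.

Definition convex_in (R : realType) (m : nat) (A : set 'rV[R]_m) : Prop :=
  forall (x y : 'rV[R]_m) (l : R), A x -> A y -> 0 <= l -> l <= 1 ->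
    A (l *: x + (1 - l) *: y).

Definition concave_on (R : realType) (m : nat) (A : set 'rV[R]_m)
    (f : 'rV[R]_m -> R) : Prop :=
  forall (x y : 'rV[R]_m) (l : R), A x -> A y -> 0 <= l -> l <= 1 ->
    l * f x + (1 - l) * f y <= f (l *: x + (1 - l) *: y).

(* Main.v *)
Require Import Defs.
From HB Require Import structures.
From mathcomp Require Import all_boot all_order all_algebra.
From mathcomp Require Import all_classical all_reals all_analysis.
From mathcomp Require Import ring lra.
Import Order.TTheory GRing.Theory Num.Theory.
Import numFieldNormedType.Exports.
Local Open Scope classical_set_scope.
Local Open Scope ring_scope.

Lemma closure_bounded (R : realType) (m : nat) (Omega : set 'rV[R]_m) :
  bounded_set Omega -> bounded_set (closure Omega).
Proof.
rewrite /= /bounded_near; apply: filterS => M OM t clt.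
rewrite /=; case: (leP `|t| M) => // Mt; exfalso.
have := clt (ball t (`|t| - M)) (nbhsx_ballx _ _ _).
rewrite subr_gt0 => /(_ Mt) [t' [Ot' bt']].
have := OM t' Ot'; rewrite /= => t'M.
move: bt'; rewrite -ball_normE /= => tt'.
have : `|t| <= `|t'| + `|t - t'|.
  by rewrite -{1}(subrK t' t) addrC ler_normD.
move: Mt t'M tt'; lra.
Qed.

Lemma K_compact (R : realType) (m : nat) (Omega : set 'rV[R]_m) (ts : 'rV[R]_m)
  (d : R) : bounded_set Omega ->
  compact ((fun t => d *: ts + (1 - d) *: t) @` closure Omega).
Proof.
move=> bO.
have phic : continuous (fun t : 'rV[R]_m => d *: ts + (1 - d) *: t).
  move=> x.
  have FF : Filter (nbhs x) by exact: nbhs_filter.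
  apply/(@cvgrPdist_lt _ _ _ _ FF) => e e0.
  have := (@cvgrPdist_lt _ _ _ _ FF id x).1 cvg_id (e / (1 + `|1 - d|)).
  have hp : 0 < 1 + `|1 - d| by rewrite (@lt_le_trans _ _ 1) // lerDl.
  move=> /(_ (divr_gt0 e0 hp)); apply: filterS => y xy.
  rewrite opprD addrACA subrr add0r -scalerBr normrZ.
  have hc : (1 + `|1 - d|) * (e / (1 + `|1 - d|)) = e.
    by rewrite mulrC divfK // gt_eqF.
  have a0 : 0 <= `|1 - d| by [].
  have b0 : 0 <= `|x - y| by [].
  move: hc a0 b0 xy; set a := `|1 - d|; set b := `|x - y|; set c := e / _.
  nra.
apply: continuous_compact; first exact: continuous_subspaceT.
apply: bounded_closed_compact; first exact: closure_bounded.
exact: closed_closure.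
Qed.
Lemma open_snd (R : realType) (m k : nat) (Omega : set 'rV[R]_m) :
  open Omega -> open [set p : 'rV[R]_k * 'rV[R]_m | Omega p.2].
Proof.
rewrite !openE => oO [x y] /= Oy.
rewrite /interior /=.
exists (setT, Omega) => /=.
  split; [exact: filterT | exact: oO].
by move=> [a b] [].
Qed.

Lemma local_est (R : realType) (m k : nat) (Omega : set 'rV[R]_m)
  (h : 'rV[R]_k -> 'rV[R]_m -> R) :
  open Omega ->
  {within [set p : 'rV[R]_k * 'rV[R]_m | Omega p.2],
     continuous (fun p : 'rV[R]_k * 'rV[R]_m => h p.1 p.2)} ->
  forall X0 s eta, Omega s -> 0 < eta ->
  exists U V, [/\ nbhs X0 U, nbhs s V &
     forall X s', U X -> V s' -> `|h X0 s - h X s'| < eta].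
Proof.
move=> oO hc X0 s eta Os e0.
have := hc; rewrite continuous_open_subspace; last exact: open_snd.
move=> /(_ (X0, s)) /=.
have : (X0, s) \in [set p : 'rV[R]_k * 'rV[R]_m | Omega p.2] by rewrite inE.
move=> H /(_ H) /cvgrPdist_lt /(_ eta e0).
case=> [[U V]] /= [UX Vs] UV.
exists U, V; split => // X s' UX' Vs'.
exact: (UV (X, s')).
Qed.
Lemma shrink_in (R : realType) (m : nat) (Omega : set 'rV[R]_m) (ts : 'rV[R]_m)
  (d : R) :
  open Omega -> convex_in Omega -> Omega ts -> 0 < d -> d <= 1 ->
  forall t, closure Omega t -> Omega (d *: ts + (1 - d) *: t).
Proof.
move=> oO cO Ots d0 d1 t clt.
have : nbhs ts Omega by move: oO; rewrite openE => /(_ _ Ots).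
rewrite nbhs_ballP => -[r /= r0 bO].
have rd0 : 0 < r * d by rewrite mulr_gt0.
have [t' [Ot' bt']] := clt (ball t (r * d)) (nbhsx_ballx _ _ rd0).
pose z := ts + ((1 - d) / d) *: (t - t').
have -> : d *: ts + (1 - d) *: t = d *: z + (1 - d) *: t'.
  rewrite /z scalerDr scalerA mulrCA divff ?gt_eqF // mulr1.
  by rewrite scalerBr addrA addrNK.
apply: cO => //; last by lra.
apply: bO; rewrite -ball_normE /= /z opprD addrA subrr add0r normrN normrZ.
move: bt'; rewrite -ball_normE /= => tt'.
rewrite ger0_norm; last by apply: divr_ge0; lra.
case: (ltP 0 (1 - d)) => h1.
  have Hp : 0 < (1 - d) / d by apply: divr_gt0.
  have : (1 - d) / d * `|t - t'| < (1 - d) / d * (r * d) by rewrite (ltr_pM2l Hp).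
  rewrite [X in _ < X]mulrCA divfK ?gt_eqF // => H.
  apply: (lt_le_trans H); rewrite -[X in _ <= X]mulr1 ler_pM2l //; lra.
have -> : 1 - d = 0 by lra.
by rewrite !mul0r.
Qed.

Lemma hbound (R : realType) (m k : nat) (Omega : set 'rV[R]_m)
  (h : 'rV[R]_k -> 'rV[R]_m -> R) (ts : 'rV[R]_m) :
  open Omega -> bounded_set Omega -> convex_in Omega ->
  {within [set p : 'rV[R]_k * 'rV[R]_m | Omega p.2],
     continuous (fun p : 'rV[R]_k * 'rV[R]_m => h p.1 p.2)} ->
  (forall X : 'rV[R]_k, concave_on Omega (h X)) -> Omega ts ->
  forall X, exists B, forall t, Omega t -> h X t <= B.
Proof.
move=> oO bO cO hc hconc Ots X.
pose d : R := 1 / 2.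
have d0 : 0 < d by rewrite /d; lra.
have d1 : d <= 1 by rewrite /d; lra.
have := @K_compact R m Omega ts d bO.
move=> /compact_near_coveringP /(_ R (+oo) (fun M s => h X s <= M) _).
case.
- move=> s [t clt <-].
  have Os := @shrink_in R m Omega ts d oO cO Ots d0 d1 t clt.
  have [U [V [UX Vs UV]]] := @local_est R m k Omega h oO hc X _ 1 Os ltr01.
  exists (V, [set M | h X (d *: ts + (1 - d) *: t) + 1 < M]).
    split => /=; [exact: Vs | exact: nbhs_pinfty_gt (num_real _)].
  move=> [s' M] /= [Vs' HM].
  have := UV X s' (nbhs_singleton UX) Vs'.
  move: HM; rewrite /= ltr_norml; lra.
- move=> M0 [_ /(_ (M0 + 1)) HM].
  have {}HM := HM ltac:(by rewrite ltrDl).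
  exists (2 * (M0 + 1) - h X ts) => t Ot.
  have := hconc X ts t d Ots Ot (ltW d0) d1.
  have := HM _ (ex_intro2 _ _ t (subset_closure Ot) erefl).
  rewrite /= /d; lra.
Qed.

Theorem proposition7p1 (R : realType) (m k : nat) (Omega : set 'rV[R]_m)
  (h : 'rV[R]_k -> 'rV[R]_m -> R) :
  open Omega -> bounded_set Omega -> convex_in Omega ->
  {within [set p : 'rV[R]_k * 'rV[R]_m | Omega p.2],
     continuous (fun p : 'rV[R]_k * 'rV[R]_m => h p.1 p.2)} ->
  (forall X : 'rV[R]_k, concave_on Omega (h X)) ->
  continuous (fun X : 'rV[R]_k => sup [set h X t | t in Omega]).
Proof.
move=> oO bO cO hc hconc.
case: (pselect (Omega !=set0)) => [[ts Ots]|O0]; last first.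
  have E : Omega = set0.
    by apply/seteqP; split => x // Ox; apply: O0; exists x.
  rewrite E.
  have -> : (fun X => sup [set h X t | t in set0]) = fun=> 0.
    by apply: funext => X; rewrite image_set0 sup0.
  exact: cst_continuous.
pose H := fun X => sup [set h X t | t in Omega].
have hb := @hbound R m k Omega h ts oO bO cO hc hconc Ots.
have hs : forall X, has_sup [set h X t | t in Omega].
  move=> X; have [B hB] := hb X.
  by split; [exists (h X ts), ts | exists B => _ [t' Ot' <-]; exact: hB].
have Hup : forall X t, Omega t -> h X t <= H X.
  move=> X t Ot; apply: (@sup_upper_bound R [set h X t | t in Omega]).
    exact: hs.
  by exists t.
have Hle : forall X c, (forall t, Omega t -> h X t <= c) -> H X <= c.
  move=> X c hc'; apply: ge_sup; first by exists (h X ts), ts.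
  by move=> _ [t Ot <-]; exact: hc'.
have Hsup : forall X e, 0 < e -> exists2 t, Omega t & H X - e < h X t.
  move=> X e e0.
  have [_ [t Ot <-] ht] := sup_adherent e0 (hs X).
  by exists t.
move=> X0.
have FF : Filter (nbhs X0) by exact: nbhs_filter.
apply/(@cvgrPdist_lt _ _ _ _ FF) => e e0.
have e20 : 0 < e / 2 by rewrite divr_gt0.
have [t0 Ot0 ht0] := Hsup X0 _ e20.
have [U1 [V1 [U1X0 V1t0 UV1]]] := @local_est R m k Omega h oO hc X0 t0 _ Ot0 e20.
set H0 := H X0.
set M0 := h X0 ts.
have HM : M0 <= H0 := Hup X0 ts Ots.
set dl := e / (4 * (H0 - M0 + e)).
have pos : 0 < H0 - M0 + e by lra.
have dl0 : 0 < dl by rewrite /dl divr_gt0 // mulr_gt0.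
have hdl : dl * (H0 - M0 + e) = e / 4.
  by rewrite /dl; field; rewrite gt_eqF.
have dl1 : dl <= 1 / 4 by nra.
have dl1' : dl <= 1 by lra.
have e8 : 0 < e / 8 by rewrite divr_gt0.
have e16 : 0 < e / 16 by rewrite divr_gt0.
have Htube : \forall X \near X0, [set dl *: ts + (1 - dl) *: t | t in closure Omega]
    `<=` (fun s => `|h X0 s - h X s| < e / 8).
  move: (@K_compact R m Omega ts dl bO) => /compact_near_coveringP.
  move=> /(_ 'rV[R]_k (nbhs X0) (fun X s => `|h X0 s - h X s| < e / 8) FF).
  apply => s [t clt <-].
  have Os := @shrink_in R m Omega ts dl oO cO Ots dl0 dl1' t clt.
  have [U [V [UX0 Vs UV]]] := @local_est R m k Omega h oO hc X0 _ _ Os e16.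
  exists (V, U); first by split.
  move=> [s' X] /= [Vs' UX].
  have a := UV X s' UX Vs'.
  have b := UV X0 s' (nbhs_singleton UX0) Vs'.
  move: a b; rewrite !ltr_norml; lra.
have [U3 [V3 [U3X0 V3ts UV3]]] := @local_est R m k Omega h oO hc X0 ts _ Ots e8.
near=> X.
have hU1 : U1 X by near: X; exact: U1X0.
have hU2 : [set dl *: ts + (1 - dl) *: t | t in closure Omega]
    `<=` (fun s => `|h X0 s - h X s| < e / 8) by near: X; exact: Htube.
have hU3 : U3 X by near: X; exact: U3X0.
change (`|H0 - H X| < e).
have l1 := UV1 X t0 hU1 (nbhs_singleton V1t0).
have l2 := Hup X t0 Ot0.
have u : H X <= H0 + e / 2.
  apply: Hle => t Ot.
  have c1 := hconc X ts t dl Ots Ot (ltW dl0) dl1'.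
  have c2 := hU2 _ (ex_intro2 _ _ t (subset_closure Ot) erefl).
  have c3 := Hup X0 _ (@shrink_in R m Omega ts dl oO cO Ots dl0 dl1' t (subset_closure Ot)).
  have c4 := UV3 X ts hU3 (nbhs_singleton V3ts).
  move: c2 c4; rewrite /= !ltr_norml => c2 c4.
  move: c1 c2 c3 c4 hdl dl0 dl1 e0.
  rewrite -/H0 -/M0.
  set a := h X ts; set b := h X t; set p := h X (_ + _); set q := h X0 (_ + _).
  nra.
have ht0' : H0 - e / 2 < h X0 t0 := ht0.
move: l1; rewrite !ltr_norml => /andP [l1a l1b]; apply/andP; split; lra.
Unshelve. all: by end_near.
Qed.
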